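(* Every nonzero Lie algebra endomorphism of $\mathbb{W}_1$ is an automorphism; that is, $\mathrm{End}(\mathbb{W}_1)\setminus\{0\} = \mathrm{Aut}(\mathbb{W}_1)$.
   Context: $\Bbbk$ is a field of characteristic zero; $\mathbb{W}_1 = \mathrm{Der}(\Bbbk[t]) = \Bbbk[t]\partial$, $\partial = d/dt$, with bracket $[f\partial,g\partial] = (fg'-f'g)\partial$. $\mathrm{End}$ and $\mathrm{Aut}$ denote Lie algebra endomorphisms and automorphisms. *)

(* Defs.v *)
(* W_1 = k[t] d/dt is modelled by {poly F}: f <-> f(t) d/dt. *)
From HB Require Import structures.
From mathcomp Require Import all_boot all_order all_algebra.
Set Implicit Arguments. Unset Strict Implicit. Unset Printing Implicit Defensive.
Import GRing.Theory.
Local Open Scope ring_scope.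

(* [f d, g d] = (f g' - f' g) d *)
Definition W1bracket (F : fieldType) (f g : {poly F}) : {poly F} :=
  f * g^`() - f^`() * g.

Definition W1_End (F : fieldType) (phi : {poly F} -> {poly F}) : Prop :=
  (forall (a : F) (f g : {poly F}), phi (a *: f + g) = a *: phi f + phi g) /\
  (forall f g : {poly F}, phi (W1bracket f g) = W1bracket (phi f) (phi g)).

(* Lie algebra automorphism: a bijective endomorphism (its inverse is then
   automatically a Lie algebra endomorphism). *)
Definition W1_Aut (F : fieldType) (phi : {poly F} -> {poly F}) : Prop :=
  W1_End phi /\ bijective phi.

(* Main.v *)
Require Import Defs.
From HB Require Import structures.
From mathcomp Require Import all_boot all_order all_algebra.
From mathcomp Require Import zify ring.
Set Implicit Arguments. Unset Strict Implicit. Unset Printing Implicit Defensive.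
Import GRing.Theory.
Local Open Scope ring_scope.

Section Aux.
Variable F : fieldType.
Hypothesis charF0 : [pchar F] =i pred0.
Local Notation br := (@W1bracket F).

Lemma natF_eq0 n : (n%:R == 0 :> F) = (n == 0%N).
Proof. exact: (pcharf0P F).1 charF0 n. Qed.

Lemma natF_neq0 n : (n.+1%:R != 0 :> F).
Proof. by rewrite natF_eq0. Qed.

Lemma mulrnS_eq0 (x : F) n : (x *+ n.+1 == 0) = (x == 0).
Proof. by rewrite -mulr_natr mulf_eq0 natF_eq0 orbF. Qed.

Lemma natF_inj m n : (m%:R == n%:R :> F) = (m == n).
Proof.
wlog le: m n / (m <= n)%N.
  move=> H; case: (leqP m n) => h; first exact: H.
  by rewrite eq_sym H ?(ltnW h) // eq_sym.
rewrite -(subnKC le) natrD -subr_eq0 opprD addrA subrr sub0r oppr_eq0 natF_eq0.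
by move: (n - m)%N => k; rewrite -[X in X == _ + _]addn0 eqn_add2l eq_sym.

Qed.

Lemma size_eqS (p : {poly F}) n : (size p <= n.+1)%N -> p`_n != 0 -> size p = n.+1.
Proof.
move=> h1 h2; apply/eqP; rewrite eqn_leq h1 /= ltnNge; apply: contra h2.
by move/leq_sizeP => ->.
Qed.

Lemma size_leS (p : {poly F}) n : (size p <= n.+1)%N -> p`_n = 0 -> (size p <= n)%N.
Proof.
move=> h1 h2; rewrite leqNgt; apply/negP => h3.
have e : size p = n.+1 by apply/eqP; rewrite eqn_leq h1.
have : lead_coef p = 0 by rewrite lead_coefE e.
by move/eqP; rewrite lead_coef_eq0 -size_poly_eq0 e.
Qed.

Lemma size_derivS (p : {poly F}) n : size p = n.+1 -> size p^`() = n.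
Proof.
case: n => [|n] sp.
  have h : (size p <= 1)%N by rewrite sp.
  by rewrite (size1_polyC h) derivC size_poly0.
have pn0 : p != 0 by rewrite -size_poly_eq0 sp.
apply: size_eqS; first by have := lt_size_deriv pn0; rewrite sp.
rewrite coef_deriv mulrnS_eq0.
have : lead_coef p != 0 by rewrite lead_coef_eq0.
by rewrite lead_coefE sp.
Qed.

Lemma lead_deriv (p : {poly F}) n : size p = n.+2 ->
  lead_coef p^`() = lead_coef p *+ n.+1.
Proof.
move=> sp; rewrite !lead_coefE (size_derivS sp) sp /= coef_deriv //.
Qed.

Lemma deriv0_const (p : {poly F}) : p^`() = 0 -> p = (p`_0)%:P.
Proof.
move=> h; apply: size1_polyC; case e: (size p) => [|[|n]] //.
by move: (size_derivS e); rewrite h size_poly0.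
Qed.

Lemma brC (f g : {poly F}) : br f g = - br g f.
Proof. rewrite /W1bracket; ring. Qed.

Lemma brxx (f : {poly F}) : br f f = 0.
Proof. rewrite /W1bracket; ring. Qed.

Lemma brDr (f g h : {poly F}) : br f (g + h) = br f g + br f h.
Proof. rewrite /W1bracket derivD; ring. Qed.

Lemma brBr (f g h : {poly F}) : br f (g - h) = br f g - br f h.
Proof. rewrite /W1bracket derivB; ring. Qed.

Lemma brZr (f g : {poly F}) c : br f (c *: g) = c *: br f g.
Proof. rewrite /W1bracket derivZ -!mul_polyC; ring. Qed.

Lemma brZl (f g : {poly F}) c : br (c *: f) g = c *: br f g.
Proof. by rewrite brC brZr brC scalerN opprK. Qed.

Lemma br1 (g : {poly F}) : br 1 g = g^`().
Proof. by rewrite /W1bracket -polyC1 derivC mul1r mul0r subr0. Qed.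

Lemma brCr (f : {poly F}) c : br f c%:P = c *: br f 1.
Proof. rewrite /W1bracket -polyC1 !derivC -!mul_polyC; ring. Qed.

Lemma br_span (A B : {poly F}) x1 x2 y1 y2 :
  br (x1 *: A + x2 *: B) (y1 *: A + y2 *: B) = (x1 * y2 - x2 * y1) *: br A B.
Proof. rewrite /W1bracket !derivD !derivZ -!mul_polyC polyCB !polyCM; ring. Qed.

Lemma size2E (r : {poly F}) : (size r <= 2)%N -> r = r`_1 *: 'X + (r`_0)%:P.
Proof.
move=> h; apply/polyP => i; rewrite coefD coefZ coefX coefC.
case: i => [|[|i]] /=; rewrite ?mulr0 ?mulr1 ?add0r ?addr0 //.
by rewrite ?mulr0 ?add0r; apply: (leq_sizeP _ _ h).
Qed.

Lemma br_small (E r : {poly F}) : (size r <= 2)%N ->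
  br E r = r`_1 *: br E 'X + r`_0 *: br E 1.
Proof. by move=> h; rewrite {1}(size2E h) brDr brZr brCr. Qed.

Lemma size_br (p q : {poly F}) : (2 <= size p)%N -> (2 <= size q)%N ->
  size p != size q -> size (br p q) = (size p + size q - 2)%N.
Proof.
case ep: (size p) => [|[|a]] //; case eqq: (size q) => [|[|b]] // _ _ neq.
have pn0 : p != 0 by rewrite -size_poly_eq0 ep.
have qn0 : q != 0 by rewrite -size_poly_eq0 eqq.
have dp := size_derivS ep; have dq := size_derivS eqq.
have dpn0 : p^`() != 0 by rewrite -size_poly_eq0 dp.
have dqn0 : q^`() != 0 by rewrite -size_poly_eq0 dq.
have s1 : size (p * q^`()) = (a + b).+2 by rewrite size_mul // ep dq addnS.
have s2 : size (p^`() * q) = (a + b).+2 by rewrite size_mul // dp eqq !addnS.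
have l1 : lead_coef (p * q^`()) = lead_coef p * (lead_coef q *+ b.+1).
  by rewrite lead_coefM (lead_deriv eqq).
have l2 : lead_coef (p^`() * q) = (lead_coef p *+ a.+1) * lead_coef q.
  by rewrite lead_coefM (lead_deriv ep).
have -> : (a.+2 + b.+2 - 2 = (a + b).+2)%N by rewrite !addnS !subSS subn0.
apply: size_eqS.
  rewrite /W1bracket (leq_trans (size_polyD _ _)) // size_polyN s1 s2 maxnn //.
rewrite /W1bracket coefB.
move: l1 l2; rewrite [lead_coef (p * _)]lead_coefE [lead_coef (_ * q)]lead_coefE s1 s2 /= => -> ->.
set lp := lead_coef p; set lq := lead_coef q.
have -> : lp * (lq *+ b.+1) - lp *+ a.+1 * lq = lp * lq * (b.+1%:R - a.+1%:R).
  by rewrite -[lq *+ _]mulr_natr -[lp *+ _]mulr_natr mulrBr !mulrA [lp * _ * lq]mulrAC.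
rewrite mulf_neq0 ?mulf_neq0 /lp /lq ?lead_coef_eq0 // subr_eq0 natF_inj eq_sym.
exact: neq.
Qed.

Lemma br0l (g : {poly F}) : br 0 g = 0.
Proof. by rewrite /W1bracket deriv0 !mul0r subr0. Qed.

Lemma brpow (u : {poly F}) m :
  br u (u ^+ m.+1) = m%:R *: (u^`() * u ^+ m.+1).
Proof.
rewrite /W1bracket deriv_exp /= scaler_nat -mulr_natr -[_ *+ m]mulr_natr exprS.
by rewrite -natr1; ring.
Qed.

Lemma span_contra (E H L A B : {poly F}) x1 x2 y1 y2 z1 z2 :
  E = x1 *: A + x2 *: B -> H = y1 *: A + y2 *: B -> L = z1 *: A + z2 *: B ->
  br E H = E -> br E L = 2%:R *: H -> E = 0.
Proof.
move=> eE eH eL h1 h2.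
have cE : E = (x1 * y2 - x2 * y1) *: br A B by rewrite -{1}h1 eE eH br_span.
have cH : 2%:R *: H = (x1 * z2 - x2 * z1) *: br A B by rewrite -h2 eE eL br_span.
have : 2%:R *: E = 0.
  by rewrite -{1}h1 -brZr cH {1}cE brZl brZr brxx !scaler0.
by move/eqP; rewrite scaler_eq0 natF_eq0 /= => /eqP.
Qed.

End Aux.

Section Main.
Variable F : fieldType.
Hypothesis charF0 : [pchar F] =i pred0.
Local Notation br := (@W1bracket F).
Variable phi : {poly F} -> {poly F}.
Hypothesis hlin : forall (a : F) (f g : {poly F}), phi (a *: f + g) = a *: phi f + phi g.
Hypothesis hbr : forall f g : {poly F}, phi (br f g) = br (phi f) (phi g).
Hypothesis hnz : exists f : {poly F}, phi f != 0.

Lemma phi0 : phi 0 = 0.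
Proof.
have := hlin 1 0 0; rewrite !scale1r addr0 => h.
by apply: (addrI (phi 0)); rewrite -h addr0.
Qed.

Lemma phiZ a f : phi (a *: f) = a *: phi f.
Proof. by have := hlin a f 0; rewrite !addr0 phi0 addr0. Qed.

Lemma phiD f g : phi (f + g) = phi f + phi g.
Proof. by have := hlin 1 f g; rewrite !scale1r. Qed.

Lemma phi_sum (I : Type) (r : seq I) (G : I -> {poly F}) :
  phi (\sum_(i <- r) G i) = \sum_(i <- r) phi (G i).
Proof.
elim: r => [|x r IH]; first by rewrite !big_nil phi0.
by rewrite !big_cons phiD IH.
Qed.

Lemma phi_expand p : phi p = \sum_(i < size p) p`_i *: phi 'X^i.
Proof.
rewrite -{1}[p]coefK poly_def phi_sum; apply: eq_bigr => i _; exact: phiZ.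
Qed.

Local Notation P k := (phi 'X^k).

Lemma P0 : P 0 = phi 1.
Proof. by rewrite expr0. Qed.

Lemma brE k : br (phi 1) (P k.+1) = k.+1%:R *: P k.
Proof. by rewrite -hbr br1 derivXn /= -scaler_nat phiZ. Qed.

Lemma brH k : br (P 1) (P k.+1) = k%:R *: P k.+1.
Proof.
rewrite -hbr -phiZ; congr phi.
rewrite /W1bracket derivXn /= expr1 derivX mul1r mulrnAr -exprS mulrSr addrK.
by rewrite scaler_nat.
Qed.

Lemma E_neq0 : phi 1 != 0.
Proof.
apply/negP => /eqP E0; case: hnz => f; rewrite phi_expand big1 ?eqxx // => i _.
have := brE i; rewrite E0 br0l => /esym /eqP.
rewrite scaler_eq0 (natF_eq0 charF0) /= => /eqP ->.
by rewrite scaler0.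
Qed.


Lemma sizeE_le1 : (size (phi 1) <= 1)%N.
Proof.
rewrite leqNgt; apply/negP => hE.
set E := phi 1 in hE *.
have boundP : forall k, (size (P k) <= size E)%N.
  elim=> [|k IH]; first by rewrite P0.
  rewrite leqNgt; apply/negP => hk.
  have := size_br charF0 hE (ltn_trans hE hk) (negbT (ltn_eqF hk)).
  rewrite brE size_scale ?(natF_neq0 charF0) // => e.
  move: IH; rewrite e; lia.
have hspan : forall k, exists x1 x2,
    P k = x1 *: br E 'X + x2 *: br E 1.
  move=> k.
  set q := P k.+1.
  set beta := q`_(size E).-1 / lead_coef E.
  set r := q - beta *: E.
  have Enz : E != 0 by rewrite -size_poly_eq0 -lt0n (ltn_trans _ hE).
  have hr1 : (size r <= (size E).-1.+1)%N.
    rewrite prednK ?(ltn_trans _ hE) // /r (leq_trans (size_polyD _ _)) //.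
    by rewrite size_polyN geq_max boundP size_scale_leq.
  have hr2 : r`_(size E).-1 = 0.
    by rewrite /r coefB coefZ -lead_coefE /beta divfK ?subrr // lead_coef_eq0.
  have hr3 := size_leS hr1 hr2.
  have hbrr : br E r = k.+1%:R *: P k.
    by rewrite /r brBr brZr brxx scaler0 subr0 brE.
  have hr4 : (size r <= 2)%N.
    rewrite leqNgt; apply/negP => h.
    have hne : size E != size r.
      by apply/negP => /eqP ee; move: hr3; rewrite -ee; lia.
    have := size_br charF0 hE (ltnW h) hne.
    rewrite hbrr size_scale ?(natF_neq0 charF0) // => e.
    have := boundP k; rewrite e; lia.
  exists (r`_1 / k.+1%:R), (r`_0 / k.+1%:R).
  have := br_small E hr4; rewrite hbrr => e.
  apply: (scalerI (natF_neq0 charF0 k)).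
  rewrite e [RHS]scalerDr !scalerA ![k.+1%:R * _]mulrC !divfK ?(natF_neq0 charF0) //.
have [x1 [x2 eE]] := hspan 0%N.
have [y1 [y2 eH]] := hspan 1%N.
have [z1 [z2 eL]] := hspan 2%N.
rewrite P0 -/E in eE.
have h1 : br E (P 1) = E by rewrite brE scale1r P0.
have h2 : br E (P 2) = 2%:R *: P 1 by rewrite brE.
have := span_contra charF0 eE eH eL h1 h2.
by move/eqP; rewrite -size_poly_eq0; move=> /eqP e; move: hE; rewrite e.
Qed.


Lemma phi_formula : exists c b : F, c != 0 /\
  forall p, phi p = c *: (p \Po (c^-1 *: ('X + b%:P))).
Proof.
set c := (phi 1)`_0.
have eE : phi 1 = c%:P := size1_polyC sizeE_le1.
have cnz : c != 0 by rewrite -polyC_eq0 -eE E_neq0.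
have cPnz : c%:P != 0 by rewrite polyC_eq0.
have dH : (P 1)^`() = 1.
  have := brE 0; rewrite scale1r P0 eE /W1bracket derivC mul0r subr0.
  by rewrite -{2}[c%:P]mulr1; apply: mulfI.
set b := (P 1 - 'X)`_0.
have eH : P 1 = 'X + b%:P.
  have := deriv0_const charF0 (p := P 1 - 'X); rewrite derivB dH derivX subrr.
  by move=> /(_ erefl) <-; rewrite addrC subrK.
set u := c^-1 *: ('X + b%:P).
have du : u^`() = (c^-1)%:P.
  by rewrite /u derivZ derivD derivX derivC addr0 -mul_polyC mulr1.
have cu : c *: u = 'X + b%:P by rewrite /u scalerA mulfV // scale1r.
have hP : forall k, P k = c *: u ^+ k.
  elim=> [|k IH]; first by rewrite P0 eE expr0 -mul_polyC mulr1.
  set Q := P k.+1; set Z := c *: u ^+ k.+1.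
  have hQ : c%:P * Q^`() = k.+1%:R *: (c *: u ^+ k).
    have := brE k; rewrite eE -IH /W1bracket derivC mul0r subr0 => ->.
    by [].
  have hZ : c%:P * Z^`() = k.+1%:R *: (c *: u ^+ k).
    rewrite /Z derivZ deriv_exp du /= -!mul_polyC polyC_natr.
    rewrite -[_ *+ k.+1]mulr_natr.
    transitivity ((c%:P * (c^-1)%:P) * (c%:P * u ^+ k * k.+1%:R)); first by ring.
    by rewrite -polyCM mulfV // polyC1 mul1r mulrC.
  have hd : (Q - Z)^`() = 0.
    by rewrite derivB; apply/eqP; rewrite subr_eq0; apply/eqP/(mulfI cPnz); rewrite hQ hZ.
  have eQ := deriv0_const charF0 hd; set d := (Q - Z)`_0 in eQ.
  have brHd : br (P 1) d%:P = - d%:P.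
    by rewrite /W1bracket derivC mulr0 sub0r dH mul1r.
  have brHZ : br (P 1) Z = k%:R *: Z.
    rewrite eH -cu /Z brZl brZr brpow du -!mul_polyC.
    transitivity ((c%:P * (c^-1)%:P) * ((k%:R)%:P * (c%:P * u ^+ k.+1))); first by ring.
    by rewrite -polyCM mulfV // polyC1 mul1r.
  have : (k.+1%:R : F) *: d%:P = 0.
    have := brH k; rewrite -/Q.
    have -> : Q = Z + d%:P by rewrite -eQ addrC subrK.
    rewrite brDr brHd brHZ scalerDr => /eqP; rewrite -subr_eq0.
    have -> : k%:R *: Z - d%:P - (k%:R *: Z + k%:R *: d%:P) = - (k.+1%:R *: d%:P).
      by rewrite -!mul_polyC !polyC_natr; ring.
    by rewrite oppr_eq0 => /eqP.
  move/eqP; rewrite scaler_eq0 (natF_eq0 charF0) /= polyC_eq0 => /eqP d0.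
  by apply/eqP; rewrite -subr_eq0 eQ polyC_eq0 d0.
exists c, b; split => // p.
rewrite phi_expand comp_polyE scaler_sumr; apply: eq_bigr => i _.
by rewrite hP !scalerA mulrC.
Qed.

End Main.

Unset Implicit Arguments.
Theorem mainTheorem12 (F : fieldType) (charF0 : [pchar F] =i pred0)
  (phi : {poly F} -> {poly F}) :
  W1_End phi -> (exists f : {poly F}, phi f != 0) -> W1_Aut phi.
Proof.
move=> hE hnz; split => //; case: hE => hlin hbr.
have [c [b [cnz hf]]] := phi_formula charF0 hlin hbr hnz.
set u := c^-1 *: ('X + b%:P).
set v := c *: 'X + (- b)%:P.
have uv : u \Po v = 'X.
  rewrite /u comp_polyZ comp_polyD comp_polyX comp_polyC /v polyCN subrK.
  by rewrite scalerA mulVf // scale1r.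
have vu : v \Po u = 'X.
  rewrite /v comp_polyD comp_polyZ comp_polyX comp_polyC /u scalerA mulfV //.
  by rewrite scale1r polyCN addrK.
exists (fun q => c^-1 *: (q \Po v)) => [p|q].
  by rewrite hf comp_polyZ scalerA mulVf // scale1r -comp_polyA uv comp_polyXr.
by rewrite hf comp_polyZ scalerA mulfV // scale1r -comp_polyA vu comp_polyXr.
Qed.
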